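(* Let $\gamma \in (0,1]$. Let $E$ be a valid e-value for a null hypothesis $H_0$, i.e. $E \ge 0$ and $\mathbb{E}[E] \le 1$ under $H_0$, and let $F$ be an arbitrary nonnegative random variable, with any dependence structure between $F$ and $E$. Let $T \in \{0,1\}$ be a random variable such that, conditionally on $(F,E)$, $T \sim \mathrm{Bern}\big((1-\gamma F^{-1})_+\big)$ (i.e. $T$ is drawn based on $F$ using additional independent randomness). Define the active e-value $$\tilde E := (1-T)\,F + T\,(1-\gamma)\,E.$$ Then $\tilde E$ is a valid e-value, i.e. $\tilde E \ge 0$ and $\mathbb{E}[\tilde E] \le 1$ under $H_0$.
   Context: $x_+ = \max(x,0)$. $F$ is a ''proxy'' for $E$ on which no distributional assumption is made (in particular $\mathbb{E}[F]$ may exceed $1$ under $H_0$). When $F = 0$, $(1-\gamma F^{-1})_+$ is interpreted as $0$. *)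

(* Defs.v *)
From HB Require Import structures.
From mathcomp Require Import all_boot all_order all_algebra.
From mathcomp Require Import all_classical all_reals all_analysis.
Set Implicit Arguments. Unset Strict Implicit. Unset Printing Implicit Defensive.
Import Order.TTheory GRing.Theory Num.Theory.
Local Open Scope classical_set_scope.
Local Open Scope ring_scope.

Definition bern_param (R : realType) (gamma f : R) : R :=
  if f == 0 then 0 else Num.max (1 - gamma / f) 0.

(* Conditionally on (F,E), T ~ Bern(bern_param gamma F):
   for every measurable A in R x R,
   P(T = 1, (F,E) in A) = E[ bern_param gamma F ; (F,E) in A ],
   i.e. P(T = 1 | F, E) = bern_param gamma F almost surely. *)
Definition cond_bern d (Omega : measurableType d) (R : realType)
  (P : probability Omega R) (gamma : R) (F E T : Omega -> R) : Prop :=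
  forall A : set (R * R), measurable A ->
    P ([set w | T w = 1] `&` ((fun w => (F w, E w)) @^-1` A)) =
    (\int[P]_(w in (fun w => (F w, E w)) @^-1` A) (bern_param gamma (F w))%:E)%E.

Definition active_evalue (R : realType) (gamma : R) (F E T : R) : R :=
  (1 - T) * F + T * (1 - gamma) * E.

(* Main.v *)
Require Import Defs.
From HB Require Import structures.
From mathcomp Require Import all_boot all_order all_algebra.
From mathcomp Require Import all_classical all_reals all_analysis.
From mathcomp Require Import measurable_realfun.
Import Order.TTheory GRing.Theory Num.Theory.
Local Open Scope classical_set_scope.
Local Open Scope ring_scope.

Set Implicit Arguments. Unset Strict Implicit.
Section qfacts.
Context (R : realType) (gamma : R) (g0 : 0 < gamma).
Definition qf (y : R) : R := gamma / Num.max y gamma.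

Lemma qmax_gt0 y : 0 < Num.max y gamma.
Proof. by rewrite lt_max g0 orbT. Qed.

Lemma qf_ge0 y : 0 <= qf y.
Proof. by rewrite /qf divr_ge0 // ?ltW // qmax_gt0. Qed.

Lemma qf_le1 y : qf y <= 1.
Proof. by rewrite /qf ler_pdivrMr ?qmax_gt0 // mul1r le_max lexx orbT. Qed.

Lemma qf_mul y : 0 <= y -> y * qf y <= gamma.
Proof.
move=> y0; rewrite /qf mulrA ler_pdivrMr ?qmax_gt0 // mulrC ler_wpM2l ?(ltW g0) //.
by rewrite le_max lexx.
Qed.

Lemma qf_ni : {homo qf : x y / x <= y >-> y <= x}.
Proof.
move=> x y xy; rewrite /qf ler_wpM2l ?(ltW g0) // lef_pV2 ?posrE ?qmax_gt0 //.
by rewrite ge_max !le_max xy lexx !orbT.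
Qed.

Lemma qf_bern y : 0 <= y -> qf y = 1 - bern_param gamma y.
Proof.
move=> y0; rewrite /qf /bern_param.
have [->|yn0] := eqVneq y 0.
  by rewrite ?eqxx subr0 max_r ?ltW // divff // gt_eqF.
have yp : 0 < y by rewrite lt_neqAle eq_sym yn0.
rewrite ?(negbTE yn0).
have [yg|gy] := leP gamma y.
  have h1 : 0 <= 1 - gamma / y by rewrite subr_ge0 ler_pdivrMr // mul1r.
  by rewrite !max_l // opprB addrC subrK.
have h2 : 1 - gamma / y <= 0 by rewrite subr_le0 ler_pdivlMr // mul1r ltW.
apply: (@eq_trans _ _ (gamma / gamma)); first by congr (_ / _); exact: max_r (ltW gy).
apply: (@eq_trans _ _ (1 - 0)); last by congr (_ - _); exact/esym/max_r.
by rewrite subr0 divff // gt_eqF.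
Qed.
End qfacts.

Unset Implicit Arguments. Set Strict Implicit.

Section dens.
Local Open Scope ereal_scope.
Context d (T : measurableType d) (R : realType).
Variables (mu nu : {measure set T -> \bar R}) (G : T -> \bar R) (E : set T).
Hypotheses (mE : measurable E) (G0 : forall x, 0 <= G x)
  (Gfin : forall x, G x \is a fin_num)
  (mG : measurable_fun setT G)
  (nuE : forall A, measurable A -> A `<=` E -> nu A = \int[mu]_(x in A) G x).
Import HBNNSimple.

Lemma density_change (f : T -> \bar R) : (forall x, 0 <= f x) -> measurable_fun E f ->
  \int[mu]_(x in E) (f x * G x) = \int[nu]_(x in E) f x.
Proof.
move=> f0 mf.
pose h := nnsfun_approx mE mf.
have -> : \int[nu]_(x in E) f x =
    lim (\int[nu]_(x in E) (EFin \o h n) x @[n --> \oo]).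
  have fE x : E x -> f x = lim ((EFin \o h n) x @[n --> \oo]).
    by move=> Ex; apply/esym/cvg_lim => //; exact: cvg_nnsfun_approx.
  under eq_integral => x /[!inE] /fE -> //.
  apply: monotone_convergence => //.
  - move=> n; apply/measurable_EFinP.
    by apply: (measurable_funS measurableT) => //; exact/measurable_funP.
  - by move=> n x Ex //=; rewrite lee_fin.
  - by move=> x Ex a b ab; rewrite lee_fin; exact/lefP/nd_nnsfun_approx.
have -> : \int[mu]_(x in E) (f x * G x) =
    lim (\int[mu]_(x in E) ((EFin \o h n) \* G) x @[n --> \oo]).
  have fg x : E x -> f x * G x = lim (((EFin \o h n) \* G) x @[n --> \oo]).
    by move=> Ex; apply/esym/cvg_lim => //; apply: cvgeZr;
      [exact: Gfin|exact: cvg_nnsfun_approx].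
  under eq_integral => x /[!inE] /fg -> //.
  apply: monotone_convergence => [//| | |].
  - move=> n; apply/emeasurable_funM; apply/measurable_funTS.
      exact/measurable_EFinP.
    exact: mG.
  - by move=> n x Ex /=; rewrite mule_ge0 ?lee_fin.
  - by move=> x Ex a b ab/=; rewrite lee_wpmul2r ?lee_fin//; exact/lefP/nd_nnsfun_approx.
suff suf n : \int[mu]_(x in E) ((EFin \o h n) x * G x) =
    \int[nu]_(x in E) (EFin \o h n) x.
  by under eq_fun do rewrite suf.
transitivity (\int[nu]_(x in E)
   (\sum_(y \in range (h n)) (y * \1_(h n @^-1` [set y]) x)%:E)); last first.
  by apply: eq_integral => t tE; rewrite /= fimfunE -fsumEFin.
have indich m r : measurable_fun E (fun x => (r * \1_(h m @^-1` [set r]) x)%:E).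
  by apply: (measurable_comp measurableT) => //; exact: measurable_funM.
rewrite ge0_integral_fsum//; last by move=> m y Ey; exact: nnfun_muleindic_ge0.
transitivity (\int[mu]_(x in E) (\sum_(y \in range (h n))
    (y * \1_(h n @^-1` [set y]) x)%:E * G x)).
  under [RHS]eq_integral => x xE.
    rewrite -ge0_mule_fsuml => [|y]; last exact: nnfun_muleindic_ge0.
    rewrite fsumEFin // -(fimfunE _ x); over.
  by [].
rewrite ge0_integral_fsum//; last 2 first.
  - move=> y; apply: emeasurable_funM => //; apply: measurable_funTS.
    exact: mG.
  - by move=> m y Ey; rewrite mule_ge0 ?nnfun_muleindic_ge0.
apply: eq_fsbigr => r rhn.
under [RHS]eq_integral do rewrite EFinM.
rewrite integralZl_indic_nnsfun => //.
under eq_integral do rewrite EFinM -muleA.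
rewrite ge0_integralZl//.
- under eq_integral do rewrite muleC.
  rewrite (eq_integral (G \_ (h n @^-1` [set r]))); last first.
    by move=> x xE; rewrite epatch_indic.
  rewrite -integral_mkcondr -nuE; last 2 first.
  + exact: measurableI.
  + by move=> x [].
  by rewrite integral_indic// setIC.
- apply: emeasurable_funM; first exact/measurable_EFinP.
  exact/measurable_funTS.
- by move=> t Et; rewrite mule_ge0 ?lee_fin.
- by move: rhn; rewrite inE => -[t _ <-]; rewrite lee_fin.
Qed.
End dens.

Lemma key_bound (d : measure_display) (Omega : measurableType d)
  (R : realType) (P : probability Omega R) (gamma : R) (E F T : Omega -> R) :
  0 < gamma ->
  measurable_fun setT E -> measurable_fun setT F -> measurable_fun setT T ->
  (forall w, 0 <= F w) ->
  (forall w, T w = 0 \/ T w = 1) ->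
  cond_bern P gamma F E T ->
  (\int[P]_w ((1 - T w) * F w)%:E <= gamma%:E)%E.
Proof.
move=> g0 mE mF mT F0 T01 cb.
pose phi w := (1 - T w) * F w - T w.
have mphi : measurable_fun setT phi.
  apply: measurable_funB => //; apply: measurable_funM => //.
  exact: measurable_funB.
pose Dp : set R := `[0%R, +oo[%classic.
have mDp : measurable Dp by exact: measurable_itv.
have DpE y : Dp y = (0 <= y) by rewrite /Dp /= in_itv /= andbT.
pose G y := (qf gamma y)%:E.
have G0 y : (0 <= G y)%E by rewrite lee_fin (qf_ge0 g0).
have Gfin y : G y \is a fin_num by [].
have mG : measurable_fun setT G.
  apply/measurable_EFinP; apply: nonincreasing_measurable => //.
  exact: (qf_ni g0).
pose Z := [set w | T w = 0].
pose O := [set w | T w = 1].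
have mZ : measurable Z by have := mT measurableT [set 0%R] (measurable_set1 _); rewrite setTI.
have mO : measurable O by have := mT measurableT [set 1%R] (measurable_set1 _); rewrite setTI.
have phiP A : A `<=` Dp -> phi @^-1` A = Z `&` F @^-1` A.
  move=> ADp; apply/seteqP; split => w /=; case: (T01 w) => Tw; rewrite /phi Tw.
  - by rewrite !subr0 mul1r => h; split.
  - by rewrite subrr mul0r sub0r => /ADp; rewrite DpE oppr_ge0 ler10.
  - by rewrite !subr0 mul1r => -[].
  - move=> -[] /= Tw0; move: Tw; rewrite Tw0 => /eqP; rewrite eq_sym oner_eq0 //.
have nuE : forall A, measurable A -> A `<=` Dp ->
    pushforward P phi A = (\int[pushforward P F]_(x in A) G x)%E.
  move=> A mA ADp.
  rewrite (ge0_integral_pushforward mF P mA (measurable_funTS mG)); last by move=> y _; exact: G0.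
  set S := F @^-1` A.
  have mS : measurable S by rewrite /S -[X in measurable X]setTI; exact: mF.
  rewrite /pushforward (phiP A ADp) -/S.
  have cbA := cb (A `*` setT) (measurableX mA measurableT).
  have preA : (fun w => (F w, E w)) @^-1` (A `*` setT) = S.
    by apply/seteqP; split => w /=; [case|split].
  rewrite preA in cbA.
  have int1 : (\int[P]_(w in S) (bern_param gamma (F w))%:E = \int[P]_(w in S) (1 - qf gamma (F w))%:E)%E.
    by apply: eq_integral => w _; rewrite (qf_bern g0 (F0 w)) opprB addrC subrK.
  have mq : measurable_fun setT (qf gamma) := nonincreasing_measurable measurableT (qf_ni g0).
  have mqF : measurable_fun S (fun w => qf gamma (F w)).
    exact: measurable_funTS (measurableT_comp mq mF).
  have sumS : (P S = \int[P]_(w in S) (qf gamma (F w))%:E + \int[P]_(w in S) (1 - qf gamma (F w))%:E)%E.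
    rewrite -ge0_integralD //.
    - under eq_integral do rewrite -EFinD addrC subrK.
      by rewrite integral_cst // mul1e.
    - by move=> w _; rewrite lee_fin (qf_ge0 g0).
    - exact/measurable_EFinP.
    - by move=> w _; rewrite lee_fin subr_ge0 (qf_le1 g0).
    - by apply/measurable_EFinP; apply: measurable_funB.
  have PS : P S = (P (Z `&` S) + P (O `&` S))%E.
    rewrite -measureU //; first congr (P _).
    - apply/seteqP; split => w /=.
        by move=> Sw; case: (T01 w) => Tw; [left|right].
      by move=> [[_ Sw]|[_ Sw]].
    - exact: measurableI.
    - exact: measurableI.
    - apply/seteqP; split => w //= [[Tw0 _] [Tw1 _]].
      by move: Tw0 Tw1; rewrite /Z /O /= => ->; move/eqP; rewrite eq_sym oner_eq0.
  have fin : (P (O `&` S)) \is a fin_num.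
    rewrite ge0_fin_numE ?measure_ge0 //.
    by rewrite (le_lt_trans (probability_le1 _ _)) ?ltry //; exact: measurableI.
  have finJ : (\int[P]_(w in S) (1 - qf gamma (F w))%:E)%E \is a fin_num.
    by rewrite -int1 -cbA.
  have := sumS; rewrite PS cbA int1 => /(congr1 (fun x => x - \int[P]_(w in S) (1 - qf gamma (F w))%:E)%E).
  by rewrite !addeK.
have f0 (y : R) : (0 <= (`|y|)%:E)%E by rewrite lee_fin normr_ge0.
have mf : measurable_fun Dp (fun y : R => (`|y|)%:E).
  apply/measurable_EFinP; exact: normr_measurable.
have dc := @density_change _ R R (pushforward P F) (pushforward P phi) G Dp mDp G0 Gfin mG nuE _ f0 mf.
have FDp : F @^-1` Dp = setT by apply/seteqP; split => w //= _; rewrite DpE.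
have phiDp : phi @^-1` Dp = Z by rewrite phiP // FDp setIT.
have mfG : measurable_fun Dp (fun y : R => (`|y|)%:E * G y)%E.
  by apply: emeasurable_funM => //; exact: measurable_funTS.
have fG0 : {in Dp, forall y : R, (0 <= (`|y|)%:E * G y)%E}.
  by move=> y _; rewrite mule_ge0.
have {}dc := dc mF mphi.
rewrite (ge0_integral_pushforward mF P mDp mfG fG0) in dc.
rewrite (ge0_integral_pushforward mphi P mDp mf) in dc; last by move=> y _.
rewrite FDp phiDp in dc.
have -> : (\int[P]_w ((1 - T w) * F w)%:E = \int[P]_(w in Z) ((fun y : R => (`|y|)%:E) \o phi) w)%E.
  rewrite [RHS]integral_mkcond; apply: eq_integral => w _; rewrite patchE.
  case: ifPn => [/[!in_setE] Tw|/negP Tw].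
    by rewrite /Z /= in Tw; rewrite /= /phi Tw !subr0 mul1r ger0_norm.
  case: (T01 w) => Tw'; first by exfalso; apply: Tw; rewrite in_setE.
  by rewrite Tw' subrr mul0r.
rewrite -dc.
have mfGT : measurable_fun setT (fun y : R => (`|y|)%:E * G y)%E.
  apply: emeasurable_funM => //; apply/measurable_EFinP; exact: normr_measurable.
apply: (@le_trans _ _ (\int[P]_x (cst gamma%:E) x)%E).
  apply: ge0_le_integral => //.
  - by move=> w _; rewrite /= mule_ge0.
  - exact: measurableT_comp mfGT mF.
  - by move=> w _; rewrite /= /G -EFinM lee_fin ger0_norm ?F0 // (qf_mul g0).
rewrite integral_cst // -[X in (_ <= X)%E]mule1; apply: lee_wpmul2l; first by rewrite lee_fin ltW.
exact: probability_le1.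
Qed.

Theorem proposition1 (d : measure_display) (Omega : measurableType d)
  (R : realType) (P : probability Omega R) (gamma : R) (E F T : Omega -> R) :
  0 < gamma <= 1 ->
  measurable_fun setT E -> measurable_fun setT F -> measurable_fun setT T ->
  (forall w, 0 <= E w) ->
  (\int[P]_w (E w)%:E <= 1)%E ->
  (forall w, 0 <= F w) ->
  (forall w, T w = 0 \/ T w = 1) ->
  cond_bern P gamma F E T ->
  (forall w, 0 <= active_evalue gamma (F w) (E w) (T w)) /\
  (\int[P]_w (active_evalue gamma (F w) (E w) (T w))%:E <= 1)%E.
Proof.
move=> /andP[g0 g1] mE mF mT E0 intE F0 T01 cb.
have t1 w : 0 <= (1 - T w) * F w.
  by case: (T01 w) => ->; rewrite ?subr0 ?mul1r ?subrr ?mul0r.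
have t2 w : 0 <= T w * (1 - gamma) * E w.
  case: (T01 w) => ->; rewrite ?mul0r ?mul1r //.
  by rewrite mulr_ge0 // subr_ge0.
split.
  by move=> w; rewrite /active_evalue addr_ge0.
rewrite /active_evalue.
under eq_integral do rewrite EFinD.
rewrite ge0_integralD //.
- apply: (@le_trans _ _ (gamma%:E + (1 - gamma)%:E)%E); last first.
    by rewrite -EFinD addrC subrK.
  apply: leeD; first exact: (@key_bound _ _ _ P gamma E F T g0 mE mF mT F0 T01 cb).
  apply: (@le_trans _ _ (\int[P]_w ((1 - gamma)%:E * (E w)%:E))%E).
    apply: ge0_le_integral => //.
    + by move=> w _; rewrite lee_fin.
    + apply/measurable_EFinP; apply: measurable_funM => //.
      apply: measurable_funM => //; exact: measurable_cst.
    + apply: emeasurable_funM; first exact: measurable_cst.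
      exact/measurable_EFinP.
    + move=> w _; rewrite -EFinM lee_fin.
      by case: (T01 w) => ->; rewrite ?mul0r ?mul1r // mulr_ge0 // subr_ge0.
  rewrite ge0_integralZl //.
  + rewrite -[X in (_ <= X)%E]mule1; apply: lee_wpmul2l => //.
    by rewrite lee_fin subr_ge0.
  + exact/measurable_EFinP.
  + by move=> w _; rewrite lee_fin.
  + by rewrite lee_fin subr_ge0.
- by move=> w _; rewrite lee_fin.
- apply/measurable_EFinP; apply: measurable_funM => //.
  apply: measurable_funB => //; exact: measurable_cst.
- by move=> w _; rewrite lee_fin.
- apply/measurable_EFinP; apply: measurable_funM => //.
  apply: measurable_funM => //; exact: measurable_cst.
Qed.
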